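(* For every integer $i\ge1$, $f(R_i)=i-1$.
   Context: Rooted binary trees $H_i$ are defined recursively: $H_1$ is a single vertex $r'_1$; for $i\ge2$, $H_i$ has root $r'_i$ with exactly two children: a leaf, and the root $r'_{i-1}$ of a copy of $H_{i-1}$. Rooted binary trees $R_i$ are defined recursively: $R_1$ is a single vertex $r_1$; for $i\ge2$, $R_i$ has root $r_i$ with exactly two children: the root $r_{i-1}$ of a copy of $R_{i-1}$ and the root $r'_{i-1}$ of a copy of $H_{i-1}$. For a rooted tree $T_r$, $h(T_r)$ is the number of vertices on a longest path in $T_r$ starting at $r$ ($h$ of a single vertex is $1$; the empty tree has $h=0$ and $f=0$), and $T_v$ is the subtree of descendants of $v$ rooted at $v$. The function $f$ is defined recursively: if $|V(T_r)|\le1$ then $f(T_r)=0$; otherwise let the children of $r$ be $v_1,\dots,v_k$ ordered so that $h(T_{v_1})\ge\dots\ge h(T_{v_k})$, appending an empty tree $T_{v_k}$ if needed so that $k$ is even; then $f(T_r)=\max\{\sum_{i=1}^k f(T_{v_i}),\ \sum_{i=1}^{k/2} h(T_{v_{2i}})\}$. *)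

(* Defs.v *)
From mathcomp Require Import all_boot.
Set Implicit Arguments. Unset Strict Implicit. Unset Printing Implicit Defensive.

Inductive tree : Type := Node of seq tree.

Definition children (t : tree) : seq tree := let: Node c := t in c.

(* h(T_r): number of vertices on a longest path starting at the root. *)
Fixpoint height (t : tree) : nat :=
  let: Node c := t in (foldr maxn 0 (map height c)).+1.

(* sum of the entries at positions 2,4,6,... (1-indexed) of s *)
Fixpoint sum_even_pos (s : seq nat) : nat :=
  match s with
  | _ :: y :: s' => y + sum_even_pos s'
  | _ => 0
  end.

(* The heights of the children sorted non-increasingly, padded with the
   height 0 of an empty tree when the number of children is odd. *)
Definition sorted_child_heights (c : seq tree) : seq nat :=
  let hs := sort geq (map height c) in
  if odd (size hs) then rcons hs 0 else hs.

(* f as in the paper; a tree with <= 1 vertex (no children) gets 0.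
   The padded empty tree contributes f = 0 to the first sum. *)
Fixpoint f (t : tree) : nat :=
  let: Node c := t in
  match c with
  | [::] => 0
  | _ => maxn (sumn (map f c)) (sum_even_pos (sorted_child_heights c))
  end.

Definition leaf : tree := Node [::].

Fixpoint H (i : nat) : tree :=
  match i with
  | 0 | 1 => leaf
  | i'.+1 => Node [:: leaf; H i']
  end.

Fixpoint R (i : nat) : tree :=
  match i with
  | 0 | 1 => leaf
  | i'.+1 => Node [:: R i'; H i']
  end.

(* Main.v *)
Require Import Defs.
From mathcomp Require Import all_boot.

Lemma geq_tr : transitive geq.
Proof. by move=> a b c /= h1 h2; apply: leq_trans h2 h1. Qed.

Lemma sch2 (a b : tree) : height b <= height a ->
  sorted_child_heights [:: a; b] = [:: height a; height b].
Proof.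
move=> h; rewrite /sorted_child_heights /= sorted_sort //; first exact: geq_tr.
by rewrite /= h.
Qed.

Lemma sch2r (a b : tree) : height a <= height b ->
  sorted_child_heights [:: a; b] = [:: height b; height a].
Proof.
move=> h; rewrite /sorted_child_heights /=.
have -> : sort geq [:: height a; height b] = sort geq [:: height b; height a].
  apply/perm_sortP.
  - by move=> x y; rewrite /= leq_total.
  - exact: geq_tr.
  - by move=> x y /andP [h1 h2]; apply/eqP; rewrite eqn_leq; apply/andP; split.
  - by rewrite -(perm_rcons (height a) [:: height b]) perm_refl.
by rewrite sorted_sort //; [exact: geq_tr | rewrite /= h].
Qed.

Lemma fE a c : f (Node (a :: c)) =
  maxn (sumn (map f (a :: c))) (sum_even_pos (sorted_child_heights (a :: c))).
Proof. by []. Qed.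

Lemma fE2 a b : f (Node [:: a; b]) =
  maxn (f a + (f b + 0)) (sum_even_pos (sorted_child_heights [:: a; b])).
Proof. by []. Qed.

Lemma se2 x y : sum_even_pos [:: x; y] = y + 0.
Proof. by []. Qed.

Lemma height_H i : height (H i.+1) = i.+1.
Proof.
elim: i => [//|i IH].
by rewrite /= -/(H i.+1) IH maxn0 /maxn; case: i {IH}.
Qed.

Lemma f_H i : f (H i.+2) = 1.
Proof.
elim: i => [//|i IH].
rewrite [H _]/= -/(H i.+2) fE2 IH.
rewrite sch2r; last by rewrite height_H.
by [].
Qed.

Lemma height_R i : height (R i.+1) = i.+1.
Proof.
elim: i => [//|i IH].
by rewrite /= -/(R i.+1) -/(H i.+1) IH height_H maxn0 maxnn.
Qed.

Theorem lemma4 (i : nat) : 1 <= i -> f (R i) = i - 1.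
Proof.
case: i => [//|i] _; rewrite subn1 /=.
elim: i => [//|i IH].
rewrite [R _]/= -/(R i.+1) -/(H i.+1) fE2 IH.
rewrite sch2; last by rewrite height_R height_H.
rewrite se2 height_H !addn0.
case: i {IH} => [//|i]; by rewrite f_H addn1 maxnn.
Qed.
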